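(* Let $O_1(\mathbf v,d)=HC_F(\mathbf v,d)\setminus(\hat\ell_1\cup\hat\ell_2\cup\hat\ell_4)$. Then the closure of $\alpha(O_1(\mathbf v,d))$ in $\mathbb{C}P^2$ is contained in $V(\mathbf v,d)$, and $\alpha$ restricts to a rational map $\alpha:HC_F(\mathbf v,d)\dashrightarrow V(\mathbf v,d)$.
   Context: On $\mathbb{C}P^4$ use homogeneous coordinates $[w_0,w_1,w_2,w_3,x_1]$; let $Y$ be the surface $w_0w_3-w_1w_2=0$, $x_1^2+w_0w_3=0$. For parameters $[\mathbf v,d]=[v_{11},v_{12},v_{21},v_{22},d]\in\mathbb{C}P^4$ (complex, not all zero) set $a_1=v_{11}-v_{21}-d$, $a_2=-v_{11}-v_{21}+d$, $a_3=v_{11}+v_{21}+d$, $a_4=-v_{11}+v_{21}-d$, and let $HC_F(\mathbf v,d)$ be the set of points of $Y$ satisfying $2\big(v_{22}(w_3-w_0)-v_{12}(w_2-w_1)\big)x_1+a_1w_0w_1+a_2w_0w_2+a_3w_1w_3+a_4w_2w_3=0$. The lines $\hat\ell_1=\{[w_0,w_1,0,0,0]\}$, $\hat\ell_2=\{[w_0,0,w_2,0,0]\}$, $\hat\ell_4=\{[0,w_1,0,w_3,0]\}$ lie on $Y$. Define the rational map $\alpha:Y\dashrightarrow\mathbb{C}P^2$, $\alpha([w_0,w_1,w_2,w_3,x_1])=[w_3x_1,w_2x_1,w_2w_3]$ (defined where these three are not all zero). On $\mathbb{C}P^2$ with coordinates $[u_0,u_1,u_2]$ let $V(\mathbf v,d)$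 be the plane quartic curve $P=0$, where $P=a_4u_2^4+2(v_{22}u_0-v_{12}u_1)u_2^3-(a_3u_0^2+a_2u_1^2)u_2^2+2u_0u_1(v_{22}u_1-v_{12}u_0)u_2+a_1u_0^2u_1^2$. *)

(* Defs.v *)
(* The complex numbers are modelled as R[i] = complex R for
   an arbitrary R : realType (so C is the usual field of complex numbers when
   R is the real line).  Projective points are handled through homogeneous
   coordinates: a point of CP^n is represented by a nonzero coordinate vector,
   and all conditions below are homogeneous, hence independent of the chosen
   representative. *)
From mathcomp Require Import all_boot all_algebra.
From mathcomp Require Import reals complex.
From mathcomp Require Import mpoly.

Set Implicit Arguments.
Unset Strict Implicit.
Unset Printing Implicit Defensive.

Import GRing.Theory.
Local Open Scope ring_scope.

Section Defs.
Variable C : fieldType.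

Definition a1 (v11 v21 d : C) := v11 - v21 - d.
Definition a2 (v11 v21 d : C) := - v11 - v21 + d.
Definition a3 (v11 v21 d : C) := v11 + v21 + d.
Definition a4 (v11 v21 d : C) := - v11 + v21 - d.

Definition nonzero5 (w0 w1 w2 w3 x1 : C) :=
  ~ (w0 = 0 /\ w1 = 0 /\ w2 = 0 /\ w3 = 0 /\ x1 = 0).

Definition onY (w0 w1 w2 w3 x1 : C) :=
  nonzero5 w0 w1 w2 w3 x1 /\
  w0 * w3 - w1 * w2 = 0 /\ x1 ^+ 2 + w0 * w3 = 0.

Definition onHCF (v11 v12 v21 v22 d : C) (w0 w1 w2 w3 x1 : C) :=
  onY w0 w1 w2 w3 x1 /\
  2%:R * (v22 * (w3 - w0) - v12 * (w2 - w1)) * x1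
    + a1 v11 v21 d * w0 * w1 + a2 v11 v21 d * w0 * w2
    + a3 v11 v21 d * w1 * w3 + a4 v11 v21 d * w2 * w3 = 0.

Definition on_l1 (w0 w1 w2 w3 x1 : C) := w2 = 0 /\ w3 = 0 /\ x1 = 0.
Definition on_l2 (w0 w1 w2 w3 x1 : C) := w1 = 0 /\ w3 = 0 /\ x1 = 0.
Definition on_l4 (w0 w1 w2 w3 x1 : C) := w0 = 0 /\ w2 = 0 /\ x1 = 0.

Definition onO1 (v11 v12 v21 v22 d : C) (w0 w1 w2 w3 x1 : C) :=
  onHCF v11 v12 v21 v22 d w0 w1 w2 w3 x1 /\
  ~ on_l1 w0 w1 w2 w3 x1 /\ ~ on_l2 w0 w1 w2 w3 x1 /\ ~ on_l4 w0 w1 w2 w3 x1.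

Definition mk3 (a b c : C) : 'I_3 -> C := fun i => nth 0 [:: a; b; c] i.
Definition nonzero3 (u : 'I_3 -> C) := exists i, u i <> 0.
Definition proj_eq3 (u u' : 'I_3 -> C) := exists2 l : C, l <> 0 & forall i, u i = l * u' i.

Definition alpha (w0 w1 w2 w3 x1 : C) : 'I_3 -> C :=
  mk3 (w3 * x1) (w2 * x1) (w2 * w3).
Definition alpha_defined (w0 w1 w2 w3 x1 : C) :=
  nonzero3 (alpha w0 w1 w2 w3 x1).

Definition alpha_O1 (v11 v12 v21 v22 d : C) (u : 'I_3 -> C) :=
  nonzero3 u /\
  exists w0 w1 w2 w3 x1, onO1 v11 v12 v21 v22 d w0 w1 w2 w3 x1 /\
    alpha_defined w0 w1 w2 w3 x1 /\ proj_eq3 u (alpha w0 w1 w2 w3 x1).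

(* (Zariski) closure in CP^2 of a set S of points: the common zero locus of
   all homogeneous polynomials vanishing on S *)
Definition closure_P2 (S : ('I_3 -> C) -> Prop) (u : 'I_3 -> C) :=
  nonzero3 u /\
  forall (n : nat) (f : {mpoly C[3]}), f \is n.-homog ->
    (forall s, S s -> f.@[s] = 0) -> f.@[u] = 0.

Definition Pquartic (v11 v12 v21 v22 d : C) (u : 'I_3 -> C) : C :=
  let u0 := u ord0 in let u1 := u (lift ord0 ord0) in let u2 := u ord_max in
  a4 v11 v21 d * u2 ^+ 4 + 2%:R * (v22 * u0 - v12 * u1) * u2 ^+ 3
  - (a3 v11 v21 d * u0 ^+ 2 + a2 v11 v21 d * u1 ^+ 2) * u2 ^+ 2
  + 2%:R * u0 * u1 * (v22 * u1 - v12 * u0) * u2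
  + a1 v11 v21 d * u0 ^+ 2 * u1 ^+ 2.

Definition onV (v11 v12 v21 v22 d : C) (u : 'I_3 -> C) :=
  nonzero3 u /\ Pquartic v11 v12 v21 v22 d u = 0.

End Defs.

(* Main.v *)
Require Import Defs.
From mathcomp Require Import all_boot all_algebra.
From mathcomp Require Import reals complex.
From mathcomp Require Import mpoly.
From mathcomp Require Import ring.

Local Open Scope ring_scope.
Import GRing.Theory.

Section Aux.
Variable C : fieldType.

Lemma Pquartic_scale (v11 v12 v21 v22 d : C) (u u' : 'I_3 -> C) l :
  (forall i, u i = l * u' i) ->
  Pquartic v11 v12 v21 v22 d u = l ^+ 4 * Pquartic v11 v12 v21 v22 d u'.
Proof. move=> H; rewrite /Pquartic !H; ring. Qed.

Lemma part2 (v11 v12 v21 v22 d w0 w1 w2 w3 x1 : C) :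
  onHCF v11 v12 v21 v22 d w0 w1 w2 w3 x1 ->
  Pquartic v11 v12 v21 v22 d (alpha w0 w1 w2 w3 x1) = 0.
Proof.
case=> [[_ [h1 h2]] hE].
set E := (X in X = 0) in hE.
pose B := - (a3 v11 v21 d * w3^+2 + a2 v11 v21 d * w2^+2) * w2^+2 * w3^+2
   + 2%:R * x1 * w2^+2 * w3^+2 * (v22 * w2 - v12 * w3)
   + a1 v11 v21 d * w2^+2 * w3^+2 * (x1^+2 - w0 * w3).
have -> : Pquartic v11 v12 v21 v22 d (alpha w0 w1 w2 w3 x1) =
  B * (x1 ^+ 2 + w0 * w3) + w2^+2 * w3^+3 * (w2 * E + (w0 * w3 - w1 * w2) *
     (a1 v11 v21 d * w0 + a3 v11 v21 d * w3 + 2%:R * x1 * v12)).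
  rewrite /Pquartic /alpha /mk3 /B /E /a1 /a2 /a3 /a4 /=; ring.
by rewrite h1 h2 hE; ring.
Qed.

Definition X0 : {mpoly C[3]} := 'X_ord0.
Definition X1 : {mpoly C[3]} := 'X_(lift ord0 ord0).
Definition X2 : {mpoly C[3]} := 'X_ord_max.

Definition fP (v11 v12 v21 v22 d : C) : {mpoly C[3]} :=
  a4 v11 v21 d *: (X2 * X2 * X2 * X2)
  + (2%:R * v22) *: (X0 * X2 * X2 * X2)
  - (2%:R * v12) *: (X1 * X2 * X2 * X2)
  - a3 v11 v21 d *: (X0 * X0 * X2 * X2)
  - a2 v11 v21 d *: (X1 * X1 * X2 * X2)
  + (2%:R * v22) *: (X0 * X1 * X1 * X2)
  - (2%:R * v12) *: (X0 * X0 * X1 * X2)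
  + a1 v11 v21 d *: (X0 * X0 * X1 * X1).

Lemma hX (i : 'I_3) : ('X_i : {mpoly C[3]}) \is 1%N.-homog.
Proof. by rewrite dhomogX; apply/eqP; exact: mdeg1. Qed.

Lemma hM (p q : {mpoly C[3]}) d e k :
  p \is d.-homog -> q \is e.-homog -> (d + e)%N = k -> p * q \is k.-homog.
Proof. by move=> hp hq <-; apply: dhomogM. Qed.

Lemma h4 (a b c e : 'I_3) :
  ('X_a * 'X_b * 'X_c * 'X_e : {mpoly C[3]}) \is 4%N.-homog.
Proof.
apply: (@hM _ _ 3%N 1%N) => //; last exact: hX.
apply: (@hM _ _ 2%N 1%N) => //; last exact: hX.
apply: (@hM _ _ 1%N 1%N) => //; exact: hX.
Qed.

Lemma fP_homog (v11 v12 v21 v22 d : C) : fP v11 v12 v21 v22 d \is 4%N.-homog.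
Proof.
rewrite /fP /X0 /X1 /X2.
by rewrite !(rpredD, rpredB, rpredN, rpredZ, h4).
Qed.

Lemma fP_eval (v11 v12 v21 v22 d : C) (u : 'I_3 -> C) :
  (fP v11 v12 v21 v22 d).@[u] = Pquartic v11 v12 v21 v22 d u.
Proof.
rewrite /fP /X0 /X1 /X2 /Pquartic.
rewrite !(mevalD, mevalB, mevalN, mevalZ, mevalM, mevalXU).
ring.
Qed.

End Aux.

Theorem lemma6p2 (R : realType) (v11 v12 v21 v22 d : R[i]) :
  nonzero5 v11 v12 v21 v22 d ->
  (forall u : 'I_3 -> R[i],
     closure_P2 (alpha_O1 v11 v12 v21 v22 d) u -> onV v11 v12 v21 v22 d u) /\
  (forall w0 w1 w2 w3 x1 : R[i],
     onHCF v11 v12 v21 v22 d w0 w1 w2 w3 x1 ->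
     alpha_defined w0 w1 w2 w3 x1 ->
     onV v11 v12 v21 v22 d (alpha w0 w1 w2 w3 x1)).
Proof.
move=> _; split.
  move=> u [nz H]; split => //.
  rewrite -fP_eval; apply: (H 4%N); first exact: fP_homog.
  move=> s [_ [w0 [w1 [w2 [w3 [x1 [[hO _] [_ [l _ hl]]]]]]]]].
  rewrite fP_eval (@Pquartic_scale _ _ _ _ _ _ s _ l hl).
  by rewrite (@part2 _ _ _ _ _ _ _ _ _ _ _ hO) mulr0.
move=> w0 w1 w2 w3 x1 hH hd; split; first exact: hd.
exact: (@part2 _ _ _ _ _ _ _ _ _ _ _ hH).
Qed.
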